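(* Let $t \geq 1$ be an integer and let $\mathcal{F}$ be a finite family of finite sets with $\alpha(\mathcal{F}) \geq t$, $\mathcal{F}^{t,+} \neq \emptyset$ and $\mathcal{F}^{t,-} \neq \emptyset$. Suppose $k$ is an integer with $2 \leq k < \kappa(\mathcal{F},t)$ and $\mathcal{A}_1, \dots, \mathcal{A}_k$ are cross-$t$-intersecting sub-families of $\mathcal{F}$ such that $\sum_{i=1}^k |\mathcal{A}_i|$ is maximum among all $k$-tuples of cross-$t$-intersecting sub-families of $\mathcal{F}$. Then it is neither the case that $\mathcal{A}_i = \mathcal{F}$ for some $i \in [k]$ and $\mathcal{A}_j = \emptyset$ for all $j \in [k]\setminus\{i\}$, nor the case that $\mathcal{A}_1 = \dots = \mathcal{A}_k = \mathcal{L}$ for some largest $t$-intersecting sub-family $\mathcal{L}$ of $\mathcal{F}$.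
   Context: All sets and families are finite. A family $\mathcal{A}$ is $t$-intersecting if $|A \cap B| \geq t$ for all $A, B \in \mathcal{A}$ with $A \neq B$. Families $\mathcal{A}_1, \dots, \mathcal{A}_k$ (not necessarily distinct or non-empty) are cross-$t$-intersecting if for all $i \neq j$, $|A \cap B| \geq t$ for every $A \in \mathcal{A}_i$, $B \in \mathcal{A}_j$. $\alpha(\mathcal{F}) = \max\{|F| : F \in \mathcal{F}\}$; $l(\mathcal{F},t)$ is the size of a largest $t$-intersecting sub-family of $\mathcal{F}$. For a family $\mathcal{A}$, $\mathcal{A}^{t,+} = \{A \in \mathcal{A} : |A \cap B| \geq t \text{ for all } B \in \mathcal{A}\setminus\{A\}\}$ and $\mathcal{A}^{t,-} = \mathcal{A} \setminus \mathcal{A}^{t,+}$. For $\mathcal{A} \subseteq \mathcal{F}$, $\beta(\mathcal{F},t,\mathcal{A}) = \frac{l(\mathcal{F},t) - |\mathcal{A}^{t,+}|}{|\mathcal{A}^{t,-}|}$ if $\mathcal{A}^{t,-} \neq \emptyset$, and $\frac{l(\mathcal{F},t)}{|\mathcal{F}|}$ otherwise; $\beta(\mathcal{F},t) = \min_{\mathcal{A} \subseteq \mathcal{F}} \beta(\mathcal{F},t,\mathcal{A})$ and $\kappa(\mathcal{F},t) = 1/\beta(\mathcal{F},t)$. $[k] = \{1,\dots,k\}$. *)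

(* Defs.v *)
From mathcomp Require Import all_boot all_order all_algebra.
Set Implicit Arguments. Unset Strict Implicit. Unset Printing Implicit Defensive.
Import Order.TTheory GRing.Theory Num.Theory.

(* Finite sets are subsets of an arbitrary finite ground type T;
   families are elements of {set {set T}}. *)
Section Defs.
Variable T : finType.

(* alpha(F) = max size of a member of F (0 if F empty) *)
Definition alpha (F : {set {set T}}) : nat := \max_(A in F) #|A|.

Definition t_intersecting (t : nat) (A : {set {set T}}) : Prop :=
  forall X Y, X \in A -> Y \in A -> X != Y -> t <= #|X :&: Y|.

Definition t_intersectingb (t : nat) (A : {set {set T}}) : bool :=
  [forall X in A, forall Y in A, (X != Y) ==> (t <= #|X :&: Y|)].

Definition cross_t_intersecting (t k : nat) (As : 'I_k -> {set {set T}}) : Prop :=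
  forall i j : 'I_k, i != j ->
    forall X Y, X \in As i -> Y \in As j -> t <= #|X :&: Y|.

Definition lsize (F : {set {set T}}) (t : nat) : nat :=
  \max_(L in powerset F | t_intersectingb t L) #|L|.

Definition plus_part (t : nat) (A : {set {set T}}) : {set {set T}} :=
  [set X in A | [forall Y in A :\ X, t <= #|X :&: Y|]].
Definition minus_part (t : nat) (A : {set {set T}}) : {set {set T}} :=
  A :\: plus_part t A.

Definition beta_at (F : {set {set T}}) (t : nat) (A : {set {set T}}) : rat :=
  if minus_part t A != set0 then
    (((lsize F t)%:R - (#|plus_part t A|)%:R) / (#|minus_part t A|)%:R)%R
  else ((lsize F t)%:R / (#|F|)%:R)%R.

(* minimum over all A subset of F (powerset F is nonempty, contains set0) *)
Definition beta (F : {set {set T}}) (t : nat) : rat :=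
  \big[Order.min/beta_at F t set0]_(A in powerset F) beta_at F t A.

Definition kappa (F : {set {set T}}) (t : nat) : rat := ((beta F t)^-1)%R.
End Defs.

(* Main.v *)
Require Import Defs.
From mathcomp Require Import all_boot all_order all_algebra.
From mathcomp Require Import lra zify.
Import Order.TTheory GRing.Theory Num.Theory.
Set Implicit Arguments. Unset Strict Implicit.

Section Aux.
Variable T : finType.
Implicit Types (A F : {set {set T}}).

Lemma plus_sub t A : plus_part t A \subset A.
Proof. by apply/subsetP => X; rewrite inE => /andP[]. Qed.

Lemma plus_mem t A X Y : X \in plus_part t A -> Y \in A -> X != Y ->
  (t <= #|X :&: Y|)%N.
Proof.
rewrite inE => /andP[XA /forallP H] YA ne.
by move/implyP: (H Y); apply; rewrite !inE eq_sym ne YA.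
Qed.

Lemma plus_mem2 t A X Y : minus_part t A != set0 ->
  X \in plus_part t A -> Y \in A -> (t <= #|X :&: Y|)%N.
Proof.
move=> /set0Pn [Z]; rewrite inE => /andP[ZnP ZA] XP YA.
have [<-|ne] := eqVneq X Y; last exact: plus_mem XP YA ne.
rewrite setIid.
have neXZ : X != Z by apply/eqP => E; rewrite -E XP in ZnP.
apply: (leq_trans (plus_mem XP ZA neXZ)).
by apply: subset_leq_card; apply: subsetIl.
Qed.

Definition tup k (i0 : 'I_k) A : 'I_k -> {set {set T}} :=
  fun j => if j == i0 then A else plus_part 1 A.

End Aux.

Lemma tup_cross (T : finType) t k (i0 : 'I_k) (A : {set {set T}}) :
  minus_part t A != set0 ->
  cross_t_intersecting t (fun j => if j == i0 then A else plus_part t A).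
Proof.
move=> hm i j ne X Y /=.
have hPA := plus_sub t A.
case: (i =P i0) => [Ei|_]; case: (j =P i0) => [E|_].
- by rewrite E Ei eqxx in ne.
- by move=> XA YP; rewrite setIC; exact: plus_mem2 hm YP XA.
- by move=> XP YA; exact: plus_mem2 hm XP YA.
- by move=> XP YP; exact: plus_mem2 hm XP (subsetP hPA _ YP).
Qed.

Lemma tup_sum (T : finType) t k (i0 : 'I_k) (A : {set {set T}}) :
  (\sum_(j < k) #|(fun j => if j == i0 then A else plus_part t A) j|
   = #|A| + k.-1 * #|plus_part t A|)%N.
Proof.
rewrite (bigD1 i0) //= eqxx.
rewrite (eq_bigr (fun _ => #|plus_part t A|)); last by move=> j /negbTE ->.
by rewrite sum_nat_const cardC1 card_ord.
Qed.

Theorem proposition4p5 (T : finType) (t : nat) (F : {set {set T}}) (k : nat)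
  (As : 'I_k -> {set {set T}}) :
  1 <= t ->
  t <= alpha F ->
  plus_part t F != set0 ->
  minus_part t F != set0 ->
  2 <= k ->
  ((k%:R : rat) < kappa F t)%R ->
  (forall i, As i \subset F) ->
  cross_t_intersecting t As ->
  (forall Bs : 'I_k -> {set {set T}},
     (forall i, Bs i \subset F) -> cross_t_intersecting t Bs ->
     \sum_(i < k) #|Bs i| <= \sum_(i < k) #|As i|) ->
  ~ (exists i : 'I_k, As i = F /\ (forall j : 'I_k, j != i -> As j = set0)) /\
  ~ (exists L : {set {set T}},
       [/\ L \subset F, t_intersecting t L, #|L| = lsize F t &
           forall i : 'I_k, As i = L]).
Proof.
move=> t1 tal hp hm k2 hk AsF _ hmax.
have k0 : (0 < k)%N by apply: leq_trans k2.
pose i0 : 'I_k := Ordinal k0.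
have hB : forall A : {set {set T}}, A \subset F -> minus_part t A != set0 ->
    (#|A| + k.-1 * #|plus_part t A| <= \sum_(i < k) #|As i|)%N.
  move=> A AF hmA; rewrite -(tup_sum t i0 A); apply: hmax; last exact: tup_cross.
  move=> j; case: (j == i0) => //; exact: subset_trans (plus_sub t A) AF.
split.
- case=> i [Ai Aj].
  have hs : (\sum_(j < k) #|As j| = #|F|)%N.
    rewrite (bigD1 i) //= Ai big1 ?addn0 // => j /Aj ->; exact: cards0.
  have := hB F (subxx F) hm; rewrite hs -{2}(addn0 #|F|) leq_add2l leqn0 muln_eq0.
  case/orP => /eqP E.
    by move: k2; rewrite -(prednK k0) E.
  by move: hp; rewrite -card_gt0 E.
- case=> L [LF _ hL AL].
  have hs : (\sum_(j < k) #|As j| = k * lsize F t)%N.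
    under eq_bigr do rewrite AL.
    by rewrite sum_nat_const card_ord hL.
  have hcard : forall A : {set {set T}},
      #|A| = (#|plus_part t A| + #|minus_part t A|)%N.
    move=> A; rewrite /minus_part -(cardsID (plus_part t A) A).
    by rewrite (setIidPr (plus_sub t A)).
  set l := lsize F t in hs.
  have kpos : (0 < (k%:R : rat))%R by rewrite ltr0n.
  have hkA : forall A, A \in powerset F -> ((k%:R : rat)^-1 <= beta_at F t A)%R.
    move=> A; rewrite inE => AF; rewrite /beta_at; case: ifP => hmA.
      have := hB A AF hmA; rewrite hs hcard.
      have mpos : (0 < #|minus_part t A|)%N by rewrite card_gt0.
      move: #|minus_part t A| #|plus_part t A| mpos => m p mpos hn.
      have hn' : (m + k * p <= k * l)%N.
        apply: leq_trans hn; rewrite -{1}(prednK k0) mulSn; lia.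
      have hr : ((m%:R : rat) + k%:R * p%:R <= k%:R * l%:R)%R.
        by rewrite -!natrM -natrD ler_nat.
      have mr : (0 < (m%:R : rat))%R by rewrite ltr0n.
      rewrite ler_pdivlMr // mulrC ler_pdivrMr //.
      lra.
    have := hB F (subxx F) hm; rewrite hs => hn.
    have hn' : (#|F| <= k * l)%N by apply: leq_trans hn; apply: leq_addr.
    have Fpos : (0 < #|F|)%N.
      by move: hp; rewrite -card_gt0 => /leq_trans; apply; apply: subset_leq_card; apply: plus_sub.
    have hr : ((#|F|%:R : rat) <= k%:R * l%:R)%R by rewrite -natrM ler_nat.
    have mr : (0 < (#|F|%:R : rat))%R by rewrite ltr0n.
    rewrite ler_pdivlMr // mulrC ler_pdivrMr //.
    lra.
  have hbeta : ((k%:R : rat)^-1 <= beta F t)%R.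
    rewrite /beta; elim/big_rec: _ => [|A x AF IH].
      by apply: hkA; rewrite inE sub0set.
    by rewrite le_min hkA.
  have bpos : (0 < beta F t)%R by apply: lt_le_trans hbeta; rewrite invr_gt0.
  move: hk; rewrite /kappa.
  have : ((beta F t)^-1 <= k%:R)%R.
    by rewrite invf_ple ?posrE // .
  move=> h1 h2; have := lt_le_trans h2 h1; by rewrite ltxx.
Qed.
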